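(* Let $e,d,t$ be positive integers with $\gcd(e,d)=1$. Suppose $S=\langle e,e+d,e+2d,\dots,e+td\rangle$ is a numerical semigroup whose minimal generating set is $\{e,e+d,\dots,e+td\}$. Then ${\rm d}_{\max}(S)$ equals the number of integer partitions of $e-1$ into parts from $\{1,2,\dots,t\}$.
   Context: A numerical semigroup is a submonoid of $(\mathbb N,+)$ with finite complement. For $S$ with minimal generators $a_0<a_1<\dots<a_t$, an $S$-factorization of $n\in S$ is $(c_0,\dots,c_t)\in\mathbb N^{t+1}$ with $\sum c_ia_i=n$, of length $\sum c_i$. ${\rm ord}(n;S)$ is the maximal length, ${\rm d}_{\max}(n;S)$ is the number of $S$-factorizations of $n$ of length ${\rm ord}(n;S)$, and ${\rm d}_{\max}(S)=\max_{n\in S}{\rm d}_{\max}(n;S)$. *)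

(* Defs.v *)
From mathcomp Require Import all_boot.
Set Implicit Arguments. Unset Strict Implicit. Unset Printing Implicit Defensive.

Definition in_semigroup (A : seq nat) (n : nat) : Prop :=
  exists c : 'I_(size A) -> nat, \sum_(i < size A) c i * nth 0 A i = n.

Definition numerical (A : seq nat) : Prop :=
  exists F, forall n, F <= n -> in_semigroup A n.

Definition minimal_gens (A : seq nat) : Prop :=
  uniq A /\
  forall i : 'I_(size A),
    ~ exists c : 'I_(size A) -> nat,
        c i = 0 /\ \sum_(j < size A) c j * nth 0 A j = nth 0 A i.

(* A-factorizations of n.  Each coordinate c_i satisfies c_i <= n whenever the
   generators are positive, so they are encoded with values in 'I_n.+1. *)
Definition factorizations (A : seq nat) (n : nat)
  : {set {ffun 'I_(size A) -> 'I_n.+1}} :=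
  [set c : {ffun 'I_(size A) -> 'I_n.+1} | \sum_(i < size A) (c i : nat) * nth 0 A i == n].

Definition flength (A : seq nat) (n : nat) (c : {ffun 'I_(size A) -> 'I_n.+1}) : nat :=
  \sum_(i < size A) (c i : nat).

Definition ord (A : seq nat) (n : nat) : nat :=
  \max_(c in factorizations A n) flength c.

Definition dmax_n (A : seq nat) (n : nat) : nat :=
  #|[set c in factorizations A n | flength c == ord A n]|.

Definition dmax_is (A : seq nat) (m : nat) : Prop :=
  (exists n, in_semigroup A n /\ dmax_n A n = m) /\
  (forall n, in_semigroup A n -> dmax_n A n <= m).

(* Number of integer partitions of N into parts from {1,...,t}, counted via
   multiplicity vectors (mult j = multiplicity of the part j+1); each
   multiplicity is at most N, hence encoded in 'I_N.+1. *)
Definition num_partitions_parts_le (N t : nat) : nat :=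
  #|[set mult : {ffun 'I_t -> 'I_N.+1} |
       \sum_(j < t) j.+1 * (mult j : nat) == N]|.

Definition arith_gens (e d t : nat) : seq nat :=
  [seq e + i * d | i <- iota 0 t.+1].

(* Main.v *)
Require Import Defs.
From mathcomp Require Import all_boot.
From mathcomp Require Import zify.
Set Implicit Arguments. Unset Strict Implicit. Unset Printing Implicit Defensive.

Section Gen.
Variables (t e d : nat) (g : nat -> nat).
Hypotheses (e0 : 0 < e) (d0 : 0 < d) (t0 : 0 < t) (cop : coprime e d)
  (hg : forall i : 'I_t.+1, g i = e + i * d).

Definition facts n : {set {ffun 'I_t.+1 -> 'I_n.+1}} :=
  [set c : {ffun 'I_t.+1 -> 'I_n.+1} | \sum_(i < t.+1) (c i : nat) * g i == n].
Definition len n (c : {ffun 'I_t.+1 -> 'I_n.+1}) := \sum_(i < t.+1) (c i : nat).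
Definition wt n (c : {ffun 'I_t.+1 -> 'I_n.+1}) := \sum_(i < t.+1) i * (c i : nat).
Definition ordg n := \max_(c in facts n) len c.
Definition maxset n := [set c in facts n | len c == ordg n].
Definition Pset := [set mult : {ffun 'I_t -> 'I_(e.-1).+1} |
       \sum_(j < t) j.+1 * (mult j : nat) == e.-1].

Lemma split_sum n (c : {ffun 'I_t.+1 -> 'I_n.+1}) :
  \sum_(i < t.+1) (c i : nat) * g i = len c * e + d * wt c.
Proof.
rewrite /len /wt big_distrl /= big_distrr /= -big_split /=.
apply eq_bigr => i _; rewrite hg; nia.
Qed.

Lemma wt_le n (c : {ffun 'I_t.+1 -> 'I_n.+1}) : wt c <= t * len c.
Proof.
rewrite /wt /len big_distrr /=; apply leq_sum => i _.
by apply leq_mul => //; rewrite -ltnS.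
Qed.

Lemma fvec m (f : 'I_m -> nat) i : f i <= \sum_j f j.
Proof. by rewrite (bigD1 i) //= leq_addr. Qed.

Lemma exist_vec L : forall w, w <= t * L ->
  exists f : 'I_t.+1 -> nat, \sum_i f i = L /\ \sum_(i < t.+1) i * f i = w.
Proof.
elim: L => [|L IH] w hw.
  exists (fun _ => 0); split; first by rewrite big1.
  rewrite big1 ?muln0 //; lia.
have hm : minn w t < t.+1 by lia.
have [f [f1 f2]] := IH (w - minn w t) ltac:(lia).
pose k := Ordinal hm.
exists (fun i => f i + (i == k)); split.
  rewrite big_split /= f1 (bigD1 k) //= eqxx big1 ?addn0 //; first lia.
  by move=> i /negbTE ->.
rewrite (eq_bigr (fun i : 'I_t.+1 => i * f i + i * (i == k))); last by move=> i _; rewrite mulnDr.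
rewrite big_split /= f2 (bigD1 k) //= eqxx big1 ?addn0 /=; first lia.
by move=> i /negbTE ->; rewrite muln0.
Qed.

Lemma mk L w n : w <= t * L -> L <= n -> L * e + d * w = n ->
  exists c, c \in facts n /\ len c = L /\ wt c = w.
Proof.
move=> hw hL hn.
have [f [f1 f2]] := exist_vec hw.
pose c := [ffun i => inord (f i) : 'I_n.+1].
have cE i : (c i : nat) = f i.
  by rewrite ffunE inordK // ltnS (leq_trans (fvec f i)) // f1.
have lc : len c = L by rewrite /len -f1; apply eq_bigr => i _; rewrite cE.
have wc : wt c = w by rewrite /wt -f2; apply eq_bigr => i _; rewrite cE.
exists c; split => //.
by rewrite inE split_sum lc wc hn.
Qed.

Lemma max_wt n c : c \in maxset n -> wt c < e.
Proof.
rewrite inE => /andP[cf /eqP lc].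
have := cf; rewrite inE split_sum => /eqP Hn.
rewrite ltnNge; apply/negP => we.
have wL := wt_le c.
have [c' [c'f [lc' wc']]] := @mk (len c + d) (wt c - e) n ltac:(nia) ltac:(nia) ltac:(nia).
have := (@leq_bigmax_cond _ _ (@len n) c' c'f).
rewrite -/(ordg n) -lc lc'; lia.
Qed.

Definition Fm n (c : {ffun 'I_t.+1 -> 'I_n.+1}) : {ffun 'I_t -> 'I_(e.-1).+1} :=
 [ffun j => inord (c (lift ord0 j) + (if val j == 0 then e.-1 - wt c else 0))].

Lemma wt_dec n (c : {ffun 'I_t.+1 -> 'I_n.+1}) :
  wt c = \sum_(j < t) j.+1 * (c (lift ord0 j) : nat).
Proof. by rewrite /wt big_ord_recl /= mul0n add0n. Qed.

Lemma len_dec n (c : {ffun 'I_t.+1 -> 'I_n.+1}) :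
  len c = (c ord0 : nat) + \sum_(j < t) (c (lift ord0 j) : nat).
Proof. by rewrite /len big_ord_recl. Qed.

Lemma cj_le n (c : {ffun 'I_t.+1 -> 'I_n.+1}) j : (c (lift ord0 j) : nat) <= wt c.
Proof.
rewrite wt_dec (bigD1 j) //=.
apply: leq_trans (leq_addr _ _); exact: leq_pmull.
Qed.

Lemma FmE n (c : {ffun 'I_t.+1 -> 'I_n.+1}) j : wt c < e ->
  (Fm c j : nat) = c (lift ord0 j) + (if val j == 0 then e.-1 - wt c else 0).
Proof.
move=> we; rewrite ffunE inordK //.
have := cj_le c j; case: (val j == 0); lia.
Qed.

Lemma ind_sum x : \sum_(j < t) j.+1 * (if val j == 0 then x else 0) = x.
Proof.
rewrite (bigD1 (Ordinal t0)) //= mul1n big1 ?addn0 //.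
move=> j hj; have -> : (val j == 0) = false.
  by apply/negbTE; apply: contra hj => /eqP h; apply/eqP/val_inj.
by rewrite muln0.
Qed.

Lemma Fm_in n (c : {ffun 'I_t.+1 -> 'I_n.+1}) : wt c < e -> Fm c \in Pset.
Proof.
move=> we; rewrite inE.
rewrite (eq_bigr (fun j : 'I_t => j.+1 * (c (lift ord0 j) : nat) +
     j.+1 * (if val j == 0 then e.-1 - wt c else 0))); last first.
  by move=> j _; rewrite FmE // mulnDr.
rewrite big_split /= -wt_dec ind_sum; apply/eqP; lia.
Qed.

Lemma Fm_inj n : {in maxset n &, injective (@Fm n)}.
Proof.
move=> c1 c2 H1 H2 E.
have w1 := max_wt H1; have w2 := max_wt H2.
move: H1 H2; rewrite !inE => /andP[f1 /eqP l1] /andP[f2 /eqP l2].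
move: f1 f2; rewrite !split_sum l1 l2 => /eqP h1 /eqP h2.
have ww : wt c1 = wt c2 by nia.
have cj (j : 'I_t) : (c1 (lift ord0 j) : nat) = c2 (lift ord0 j).
  have := congr1 (fun F : {ffun 'I_t -> 'I_(e.-1).+1} => (F j : nat)) E; rewrite /= !FmE // ww; lia.
have c0 : (c1 ord0 : nat) = c2 ord0.
  have := len_dec c1; rewrite l1 (eq_bigr (fun j => (c2 (lift ord0 j) : nat))); last by move=> j _; rewrite cj.
  move=> h; have := len_dec c2; rewrite l2 h; exact: addIn.
apply/ffunP => i; apply/val_inj; case: (unliftP ord0 i) => [j ->|->]; [exact: cj | exact: c0].
Qed.

Lemma upper n : #|maxset n| <= #|Pset|.
Proof.
rewrite -(card_in_imset (@Fm_inj n)); apply subset_leq_card.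
apply/subsetP => x /imsetP[c hc ->]; exact: Fm_in (max_wt hc).
Qed.

Definition n0 := e.-1 * e + d * e.-1.

Lemma ord_n0 : ordg n0 <= e.-1.
Proof.
apply/bigmax_leqP => c; rewrite inE split_sum => /eqP; rewrite /n0 => h.
rewrite leqNgt; apply/negP => hL.
move: h hL; set L := len c; set W := wt c => h hL.
have hw : W < e.-1.
  rewrite ltnNge; apply/negP => hw.
  have := leq_mul (leqnn d) hw; have := ltn_pmul2r e0 (n1:=e.-1) (n2:=L); rewrite hL => h2 h1.
  have key : forall a b x y : nat, a + x = b + y -> y <= x -> b < a -> False by lia.
  exact: key h h1 h2.
have [a ha] : exists a, L = e.-1 + a.+1 by exists (L - e.-1).-1; lia.
have [b hb] : exists b, e.-1 = W + b.+1 by exists (e.-1 - W).-1; lia.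
have hab : a.+1 * e = b.+1 * d.
  move: h; rewrite ha hb; nia.
have : e %| b.+1 * d by rewrite -hab dvdn_mull.
rewrite Gauss_dvdl // => /dvdn_leq => /(_ isT); lia.
Qed.

Lemma lower : Pset \subset (@Fm n0) @: maxset n0.
Proof.
apply/subsetP => mult; rewrite inE => /eqP hm.
have sm : \sum_(j < t) (mult j : nat) <= e.-1.
  apply: leq_trans (_ : _ <= \sum_(j < t) j.+1 * (mult j : nat)) _; last by rewrite hm.
  apply leq_sum => j _; exact: leq_pmull.
pose f (i : 'I_t.+1) := if unlift ord0 i is Some j then (mult j : nat)
                        else e.-1 - \sum_(j < t) (mult j : nat).
have fl j : f (lift ord0 j) = mult j by rewrite /f liftK.
have f0 : f ord0 = e.-1 - \sum_(j < t) (mult j : nat) by rewrite /f unlift_none.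
have fb i : f i <= n0.
  rewrite /n0; case: (unliftP ord0 i) => [j ->|->]; rewrite ?fl ?f0; last nia.
  apply: leq_trans (leq_trans (fvec (fun j => (mult j : nat)) j) sm) _; nia.
pose c := [ffun i => inord (f i) : 'I_n0.+1].
have cE i : (c i : nat) = f i by rewrite ffunE inordK // ltnS.
have lc : len c = e.-1.
  have sc : \sum_(j < t) (c (lift ord0 j) : nat) = \sum_(j < t) (mult j : nat).
    by apply eq_bigr => j _; rewrite cE fl.
  by rewrite len_dec cE f0 sc subnK.
have wc : wt c = e.-1.
  rewrite wt_dec; apply: eq_trans _ hm; by apply eq_bigr => j _; rewrite cE fl.
have cf : c \in facts n0 by rewrite inE split_sum lc wc.
have om : ordg n0 = e.-1.
  apply/eqP; rewrite eqn_leq ord_n0 /= -lc; exact: (@leq_bigmax_cond _ _ (@len n0) c cf).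
apply/imsetP; exists c; first by rewrite inE cf lc om eqxx.
apply/ffunP => j; apply/val_inj => /=; rewrite FmE wc ?subnn; last lia.
rewrite cE fl; by case: (_ == 0); rewrite addn0.
Qed.

Lemma main_gen :
  (exists n, (exists c : 'I_t.+1 -> nat, \sum_(i < t.+1) c i * g i = n) /\
     #|maxset n| = #|Pset|) /\ (forall n, #|maxset n| <= #|Pset|).
Proof.
split; last exact: upper.
exists n0; split.
  have [c [cf _]] := @mk e.-1 e.-1 n0 ltac:(nia) ltac:(rewrite /n0; nia) erefl.
  exists (fun i => (c i : nat)); by move: cf; rewrite inE => /eqP.
have E : (@Fm n0) @: maxset n0 = Pset.
  apply/eqP; rewrite eqEsubset lower andbT.
  apply/subsetP => x /imsetP[c hc ->]; exact: Fm_in (max_wt hc).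
by rewrite -(card_in_imset (@Fm_inj n0)) E.
Qed.

End Gen.

Theorem proposition4p14 (e d t : nat) :
  0 < e -> 0 < d -> 0 < t -> gcdn e d = 1 ->
  numerical (arith_gens e d t) ->
  minimal_gens (arith_gens e d t) ->
  dmax_is (arith_gens e d t) (num_partitions_parts_le e.-1 t).
Proof.
move=> e0 d0 t0 cop _ _.
set A := arith_gens e d t.
have sA : size A = t.+1 by rewrite /A /arith_gens size_map size_iota.
have hA : forall i, i < size A -> nth 0 A i = e + i * d.
  move=> i; rewrite sA => hi; rewrite /A /arith_gens (nth_map 0) ?size_iota //.
  by rewrite nth_iota.
suff: forall m (g : nat -> nat), m = t.+1 -> (forall i, i < m -> g i = e + i * d) ->
  (exists n, (exists c : 'I_m -> nat, \sum_(i < m) c i * g i = n) /\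
     #|[set c in [set c : {ffun 'I_m -> 'I_n.+1} | \sum_(i < m) (c i : nat) * g i == n]
        | \sum_(i < m) (c i : nat) == \max_(c in [set c : {ffun 'I_m -> 'I_n.+1} |
            \sum_(i < m) (c i : nat) * g i == n]) \sum_(i < m) (c i : nat)]|
      = num_partitions_parts_le e.-1 t) /\
  (forall n,
     #|[set c in [set c : {ffun 'I_m -> 'I_n.+1} | \sum_(i < m) (c i : nat) * g i == n]
        | \sum_(i < m) (c i : nat) == \max_(c in [set c : {ffun 'I_m -> 'I_n.+1} |
            \sum_(i < m) (c i : nat) * g i == n]) \sum_(i < m) (c i : nat)]|
      <= num_partitions_parts_le e.-1 t).
  move=> H; have [[n [hn1 hn2]] h2] := H (size A) (nth 0 A) sA hA.
  split; first by exists n; split.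
  by move=> n' _; apply: h2.
move=> m g -> hg.
have hg' : forall i : 'I_t.+1, g i = e + i * d by move=> i; apply: hg.
have cop' : coprime e d by rewrite /coprime cop.
exact: (main_gen e0 d0 t0 cop' hg').
Qed.
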